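(* Let $\xi$ be a jumping number of $\mathfrak a$ and let $F$ be an antinef divisor with integer coefficients such that $\xi=\xi_F$. Then there is a vertex $\nu$ with $\lambda(F,D;\nu)=\xi$ such that $v_\Gamma(\nu)\ge3$ or $\widehat d_\nu>0$. In particular every jumping number of $\mathfrak a$ lies in $\mathcal H^{\mathfrak a}_\nu$ for some vertex $\nu$ which is a star or satisfies $\widehat d_\nu>0$.
   Context: Setting: $R$ two-dimensional regular local ring with algebraically closed residue field; $\mathfrak a\subset R$ a proper nonzero complete ideal of finite colength; $\pi:X=X_{N+1}\to\cdots\to X_1=\operatorname{Spec}R$ a composition of point blowups with $\mathfrak a\mathcal O_X=\mathcal O_X(-D)$. $E_\nu$ strict, $E^*_\nu$ total transforms of exceptional divisors. Basis $\widehat E_\nu$ with $E_\mu\cdot\widehat E_\nu=-\delta_{\mu,\nu}$; $\mathfrak p_\nu$ the simple complete ideal with $\mathfrak p_\nu\mathcal O_X=\mathcal O_X(-\widehat E_\nu)$; $\mathfrak a=\prod\mathfrak p_\nu^{\widehat d_\nu}$, $D=\sum\widehat d_\nu\widehat E_\nu=\sum d_\nu E_\nu$. A divisor $F=\sum f_\nu E_\nu$ is antinef if $F\cdot E_\nu\le0$ for all $\nu$. Canonical divisor $K=\sum E^*_\nu=\sum k_\nu E_\nu$. Dual graph $\Gamma$ on vertices $1..N$, $\gamma\sim\eta$ iff $\gamma\neq\eta$ and $E_\gamma\cap E_\eta\ne\emptyset$; $v_\Gamma(\nu)$ = number of adjacent vertices; a star is a vertex of valence $\ge3$. $\lambda(F,D;\nu)=(f_\nu+k_\nu+1)/d_\nu$,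 $\xi_F=\min_\nu\lambda(F,D;\nu)$; the jumping numbers of $\mathfrak a$ (the values where the multiplier ideals $\mathcal J(\mathfrak a^\xi)=\Gamma(X,\mathcal O_X(K-\lfloor\xi D\rfloor))$ jump) are exactly the numbers $\xi_F$ with $F$ antinef with integer coefficients. $\mathcal H^{\mathfrak a}_\nu=\{\xi_F\mid F\text{ antinef},\ \xi_F=\lambda(F,D;\nu)\}$. *)

(* Defs.v *)
(* Combinatorial model of a composition of point blowups
   over a 2-dimensional regular local ring. *)
From HB Require Import structures.
From mathcomp Require Import all_boot all_order all_algebra.
Set Implicit Arguments. Unset Strict Implicit. Unset Printing Implicit Defensive.
Import Order.TTheory GRing.Theory Num.Theory.
Local Open Scope ring_scope.

(* Points O_0,...,O_{N-1} blown up in this order; O_0 is the closed point of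
   Spec R, E_i is the exceptional divisor of the blowup of O_i.
   [prox j i] means: O_j is proximate to O_i, i.e. O_j lies on the strict
   transform of E_i. *)
Definition blowup_proximity (N : nat) (prox : rel 'I_N) : Prop :=
  [/\ (forall j i : 'I_N, prox j i -> (i < j)%N),
      (* every point other than the first lies on the exceptional locus *)
      (forall j : 'I_N, (0 < j)%N -> exists i, prox j i),
      (forall j i k l : 'I_N, prox j i -> prox j k -> prox j l ->
         [\/ i = k, i = l | k = l]),
      (forall j i k : 'I_N, prox j i -> prox j k -> (i < k)%N -> prox k i) &
      (* E_i and E_k (i<k) meet in at most one point of the first neighbourhood of O_k *)
      (forall j j' i k : 'I_N, prox j i -> prox j' i -> prox j k -> prox j' k ->
         (i < k)%N -> j = j')].

(* U : row mu = coordinates of the strict transform E_mu in the basis E*_j: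
   E_mu = E*_mu - sum_{j proximate to mu} E*_j. *)
Definition Umx (N : nat) (prox : rel 'I_N) : 'M[rat]_N :=
  \matrix_(mu, j) ((mu == j)%:R - (prox j mu)%:R).

(* Intersection matrix (E_mu . E_nu), using E*_i . E*_j = - delta_ij. *)
Definition interE (N : nat) (prox : rel 'I_N) : 'M[rat]_N :=
  - (Umx prox *m (Umx prox)^T).

Definition dotE (N : nat) (prox : rel 'I_N) (f : 'I_N -> rat) (nu : 'I_N) : rat :=
  \sum_mu f mu * interE prox mu nu.

Definition antinef (N : nat) (prox : rel 'I_N) (f : 'I_N -> rat) : Prop :=
  forall nu, dotE prox f nu <= 0.

(* Coefficients k_nu of K = sum E*_nu = sum k_nu E_nu. *)
Definition kcoef (N : nat) (prox : rel 'I_N) (nu : 'I_N) : rat :=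
  ((const_mx 1 : 'rV[rat]_N) *m invmx (Umx prox)) 0 nu.

(* hatE_nu (row nu) in E-coordinates: E_mu . hatE_nu = - delta_{mu,nu}. *)
Definition hatEmx (N : nat) (prox : rel 'I_N) : 'M[rat]_N :=
  - invmx (interE prox).

(* Coefficients d_nu of D = sum hatd_nu hatE_nu = sum d_nu E_nu. *)
Definition Dcoef (N : nat) (prox : rel 'I_N) (hatd : 'I_N -> nat) (mu : 'I_N) : rat :=
  \sum_nu (hatd nu)%:R * hatEmx prox nu mu.

(* Valence in the dual graph: gamma ~ nu iff gamma != nu and E_gamma meets E_nu
   (strict transforms meet transversally, so iff E_gamma . E_nu > 0). *)
Definition valence (N : nat) (prox : rel 'I_N) (nu : 'I_N) : nat :=
  #|[set gamma : 'I_N | (gamma != nu) && (0 < interE prox gamma nu)]|.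

Definition lambdaF (N : nat) (prox : rel 'I_N) (hatd : 'I_N -> nat)
  (f : 'I_N -> int) (nu : 'I_N) : rat :=
  ((f nu)%:~R + kcoef prox nu + 1) / Dcoef prox hatd nu.

Definition is_xiF (N : nat) (prox : rel 'I_N) (hatd : 'I_N -> nat)
  (f : 'I_N -> int) (x : rat) : Prop :=
  (exists nu, lambdaF prox hatd f nu = x) /\ (forall mu, x <= lambdaF prox hatd f mu).

Definition int_antinef (N : nat) (prox : rel 'I_N) (f : 'I_N -> int) : Prop :=
  antinef prox (fun mu => (f mu)%:~R).

Definition jumping_number (N : nat) (prox : rel 'I_N) (hatd : 'I_N -> nat) (x : rat) : Prop :=
  exists f : 'I_N -> int, int_antinef prox f /\ is_xiF prox hatd f x.

Definition Hset (N : nat) (prox : rel 'I_N) (hatd : 'I_N -> nat) (nu : 'I_N) (x : rat) : Prop :=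
  exists f : 'I_N -> int, [/\ int_antinef prox f, is_xiF prox hatd f x &
                              lambdaF prox hatd f nu = x].

(* Main.v *)
Require Import Defs.
From HB Require Import structures.
From mathcomp Require Import all_boot all_order all_algebra.
From mathcomp Require Import ring lra zify.
Set Implicit Arguments. Unset Strict Implicit. Unset Printing Implicit Defensive.
Import Order.TTheory GRing.Theory Num.Theory.
Local Open Scope ring_scope.

Definition wf (N : nat) (prox : rel 'I_N) := forall j i : 'I_N, prox j i -> (i < j)%N.

Lemma UE N (prox : rel 'I_N) mu j :
  Umx prox mu j = (mu == j)%:R - (prox j mu)%:R.
Proof. by rewrite /Umx mxE. Qed.

Lemma U_unit N (prox : rel 'I_N) : wf prox -> Umx prox \in unitmx.
Proof.
move=> hw; rewrite unitmxE -det_tr det_trig.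
  rewrite (eq_bigr (fun _ => 1)) ?big1_eq ?unitr1 // => i _.
  rewrite mxE UE eqxx.
  by case: (boolP (prox i i)) => h; [have := hw _ _ h; rewrite ltnn | rewrite subr0].
apply/is_trig_mxP => i j lij; rewrite mxE UE.
have -> : (j == i) = false by apply/negbTE; rewrite neq_ltn lij orbT.
by case: (boolP (prox i j)) => h; [have := hw _ _ h; rewrite ltnNge ltnW | rewrite subr0].
Qed.

Lemma I_unit N (prox : rel 'I_N) : wf prox -> interE prox \in unitmx.
Proof.
move=> hw; rewrite /interE.
have hu := U_unit hw.
have hut : (Umx prox)^T \in unitmx by rewrite unitmx_tr.
have : (- (Umx prox *m (Umx prox)^T)) *m (- (invmx (Umx prox)^T *m invmx (Umx prox))) = 1%:M.
  rewrite mulNmx mulmxN opprK.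
  by rewrite !mulmxA mulmxK // mulmxV.
by case/mulmx1_unit.
Qed.

Definition rv N (g : 'I_N -> rat) : 'rV[rat]_N := \row_i g i.

Lemma dotE_mx N (prox : rel 'I_N) g nu : dotE prox g nu = (rv g *m interE prox) 0 nu.
Proof. rewrite /dotE [in RHS]mxE. apply: eq_bigr => i _. by rewrite /rv; congr (_ * _); rewrite mxE. Qed.

Lemma dotE_U N (prox : rel 'I_N) g nu :
  dotE prox g nu = - \sum_j (rv g *m Umx prox) 0 j * Umx prox nu j.
Proof.
rewrite dotE_mx /interE mulmxN mulmxA mxE mxE; congr (- _).
by apply: eq_bigr => j _; rewrite [(_^T) _ _]mxE.
Qed.

Lemma interE_U N (prox : rel 'I_N) mu nu :
  interE prox mu nu = - \sum_j Umx prox mu j * Umx prox nu j.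
Proof. rewrite /interE mxE mxE; congr (- _); apply: eq_bigr => j _. by rewrite [(_^T) _ _]mxE. Qed.

Lemma prox_irr N (prox : rel 'I_N) i : wf prox -> prox i i = false.
Proof. by move=> hw; apply/negP => h; have := hw _ _ h; rewrite ltnn. Qed.

Lemma sum_delta N (F : 'I_N -> rat) i : \sum_j (i == j)%:R * F j = F i.
Proof.
rewrite (bigD1 i) //= eqxx mul1r big1 ?addr0 // => j hj.
by rewrite eq_sym (negbTE hj) mul0r.
Qed.

Lemma rv_k N (prox : rel 'I_N) : wf prox -> rv (kcoef prox) *m Umx prox = const_mx 1.
Proof.
move=> hw.
have -> : rv (kcoef prox) = const_mx 1 *m invmx (Umx prox).
  by apply/matrixP => i j; rewrite /rv mxE /kcoef (ord1 i).
by rewrite mulmxKV // U_unit.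
Qed.

Lemma KE N (prox : rel 'I_N) nu : wf prox ->
  dotE prox (kcoef prox) nu + interE prox nu nu = -2.
Proof.
move=> hw; rewrite dotE_U rv_k // interE_U -opprD -big_split /=.
rewrite (eq_bigr (fun j => (nu == j)%:R * 2)) ?sum_delta // => j _.
rewrite mxE UE.
case: (eqVneq nu j) => [<-|hne]; first by rewrite prox_irr //; ring.
by case: (prox j nu) => /=; ring.
Qed.

Lemma interE_off N (prox : rel 'I_N) mu nu : mu != nu ->
  interE prox mu nu = (prox nu mu)%:R + (prox mu nu)%:R
     - \sum_j (prox j mu)%:R * (prox j nu)%:R.
Proof.
move=> hne; rewrite interE_U.
rewrite (eq_bigr (fun j => (mu == j)%:R * ((nu == j)%:R - (prox j nu)%:R)
    - (nu == j)%:R * (prox j mu)%:R + (prox j mu)%:R * (prox j nu)%:R)); last first.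
  by move=> j _; rewrite !UE; ring.
rewrite big_split sumrB /= !sum_delta.
rewrite (negbTE (_ : nu != mu)) ?(eq_sym nu) // ; rewrite /=; ring.
Qed.

Lemma interE_sym N (prox : rel 'I_N) mu nu : interE prox mu nu = interE prox nu mu.
Proof. by rewrite !interE_U; congr (- _); apply: eq_bigr => j _; rewrite mulrC. Qed.

Lemma interE_off_bd N (prox : rel 'I_N) mu nu : blowup_proximity prox -> mu != nu ->
  0 <= interE prox mu nu <= 1.
Proof.
move=> hb.
wlog lt : mu nu / (mu < nu)%N.
  move=> H hne; case: (ltngtP mu nu) => h; first exact: H.
  - by rewrite interE_sym; apply: H => //; rewrite eq_sym.
  - by move: hne; rewrite (val_inj h) eqxx.
move=> hne; case: hb => hw _ _ h4 h5.
rewrite interE_off //.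
have -> : prox mu nu = false by apply/negP => h; have := hw _ _ h; rewrite ltnNge ltnW.
case: (pickP (fun l => prox l mu && prox l nu)) => [l /andP [l1 l2]|hn].
  have hp : prox nu mu by apply: (h4 l).
  rewrite hp (bigD1 l) //= l1 l2 big1 ?addr0; first by rewrite subrr lexx ler01.
  move=> j hj; case: (boolP (prox j mu)) => a; case: (boolP (prox j nu)) => b; rewrite ?mulr0 ?mul0r //.
  by move: hj; rewrite (h5 j l mu nu a l1 b l2 lt) eqxx.
rewrite big1; last by move=> j _; have := hn j; case: (prox j mu); case: (prox j nu).
by case: (prox nu mu); rewrite /= ?addr0 ?subr0 ?lexx ?ler01.
Qed.

Lemma valence_bd N (prox : rel 'I_N) nu : blowup_proximity prox ->
  \sum_(mu | mu != nu) interE prox mu nu <= (valence prox nu)%:R.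
Proof.
move=> hb.
apply: (le_trans (y := \sum_(mu | mu != nu) (nat_of_bool (0 < interE prox mu nu))%:R)).
  apply: ler_sum => mu hmu; have /andP [h0 h1] := interE_off_bd hb hmu.
  case: (boolP (0 < interE prox mu nu)) => h /=; first by [].
  by rewrite leNgt.
rewrite /valence -sum1_card natr_sum big_mkcond [X in _ <= X]big_mkcond /=.
rewrite le_eqVlt; apply/orP; left; apply/eqP/eq_bigr => mu _; rewrite inE.
by case: (mu != nu); case: (0 < interE prox mu nu).
Qed.

Lemma sum_ge_term N (F : 'I_N -> rat) i : (forall j, 0 <= F j) -> F i <= \sum_j F j.
Proof. by move=> h; rewrite (bigD1 i) //= lerDl sumr_ge0 // => j _; exact: h. Qed.

Lemma V_rec N (prox : rel 'I_N) i j : wf prox ->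
  invmx (Umx prox) i j = (i == j)%:R + \sum_k invmx (Umx prox) i k * (prox j k)%:R.
Proof.
move=> hw.
have e0 := mulVmx (U_unit hw).
have := congr1 (fun M : 'M[rat]_N => M i j) e0.
rewrite mxE [in RHS]mxE => e.
rewrite -e (eq_bigr (fun k => (k == j)%:R * invmx (Umx prox) i k - invmx (Umx prox) i k * (prox j k)%:R)).
  rewrite sumrB.
  rewrite (eq_bigr (fun k => (j == k)%:R * invmx (Umx prox) i k)); last by move=> k _; rewrite eq_sym.
  by rewrite sum_delta; ring.
by move=> k _; rewrite UE; ring.
Qed.

Lemma V_ge0 N (prox : rel 'I_N) i j : wf prox -> 0 <= invmx (Umx prox) i j.
Proof.
move=> hw.
suff H : forall n (j : 'I_N), val j = n -> 0 <= invmx (Umx prox) i j by exact: (H _ j erefl).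
elim/ltn_ind => n IH j0 hj0.
rewrite V_rec // addr_ge0 // ?ler0n // sumr_ge0 // => k _.
case: (boolP (prox j0 k)) => h; last by rewrite mulr0.
by rewrite mulr1; apply: (IH k) => //; rewrite -hj0; apply: hw.
Qed.

Lemma V0_ge1 N (prox : rel 'I_N) i j : blowup_proximity prox -> val i = 0%N ->
  1 <= invmx (Umx prox) i j.
Proof.
move=> hb hi; have hw : wf prox by case: hb.
case: hb => _ h2 _ _ _.
suff H : forall n (j : 'I_N), val j = n -> 1 <= invmx (Umx prox) i j by exact: (H _ j erefl).
elim/ltn_ind => n IH j0 hj0.
rewrite V_rec //.
case: (posnP n) => [n0|npos].
  have -> : i = j0 by apply: val_inj; rewrite hi hj0 n0.
  by rewrite eqxx lerDl sumr_ge0 // => k _; rewrite mulr_ge0 ?ler0n ?V_ge0.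
have [k hk] : exists k, prox j0 k by apply: h2; rewrite hj0.
rewrite -[1]add0r; apply: lerD; first exact: ler0n.
apply: le_trans (sum_ge_term k _).
  by rewrite hk mulr1; apply: (IH k) => //; rewrite -hj0; apply: hw.
by move=> l; rewrite mulr_ge0 ?ler0n ?V_ge0.
Qed.

Definition hdr N (hatd : 'I_N -> nat) := rv (fun nu => (hatd nu)%:R).

Lemma rv_D N (prox : rel 'I_N) hatd :
  rv (Dcoef prox hatd) = hdr hatd *m hatEmx prox.
Proof.
apply/matrixP => i j; rewrite /rv /hdr !mxE /Dcoef; apply: eq_bigr => k _.
by rewrite /rv; congr (_ * _); rewrite mxE.
Qed.

Lemma D_rel N (prox : rel 'I_N) hatd : wf prox ->
  rv (Dcoef prox hatd) *m interE prox = - hdr hatd.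
Proof.
move=> hw; rewrite rv_D /hatEmx (mulmxN (hdr hatd) (invmx (interE prox))) (mulNmx (hdr hatd *m invmx (interE prox))) mulmxKV //; exact: I_unit.
Qed.

Lemma dotE_D N (prox : rel 'I_N) hatd nu : wf prox ->
  dotE prox (Dcoef prox hatd) nu = - (hatd nu)%:R.
Proof. by move=> hw; rewrite dotE_mx D_rel // !mxE. Qed.

Lemma D_VV N (prox : rel 'I_N) hatd : wf prox ->
  rv (Dcoef prox hatd) = hdr hatd *m (invmx (Umx prox))^T *m invmx (Umx prox).
Proof.
move=> hw; have hI := I_unit hw; have hU := U_unit hw.
rewrite -[LHS](mulmxK hI) D_rel //.
rewrite -[RHS](mulmxK hI); congr (_ *m _).
rewrite /interE mulmxN -!mulmxA (mulmxA (invmx _)) mulVmx // mul1mx.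
by rewrite -trmx_mul mulmxV // trmx1 mulmx1.
Qed.

Lemma D_pos N (prox : rel 'I_N) hatd mu : blowup_proximity prox ->
  (exists nu, (0 < hatd nu)%N) -> 0 < Dcoef prox hatd mu.
Proof.
move=> hb [nu0 hnu0]; have hw : wf prox by case: hb.
have i0lt : (0 < N)%N by apply: leq_ltn_trans (leq0n _) (ltn_ord nu0).
pose i0 : 'I_N := Ordinal i0lt.
have -> : Dcoef prox hatd mu = rv (Dcoef prox hatd) 0 mu by rewrite /rv mxE.
rewrite D_VV // mxE.
apply: lt_le_trans (sum_ge_term i0 _); last first.
  move=> i; rewrite mulr_ge0 ?V_ge0 // mxE sumr_ge0 // => k _.
  by rewrite mxE /hdr /rv mxE mulr_ge0 ?ler0n ?V_ge0.
rewrite mxE.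
apply: lt_le_trans (_ : 1 <= _).
  by [].
rewrite -[1]mul1r; apply: ler_pM; rewrite ?ler01 //; last exact: V0_ge1.
apply: le_trans (sum_ge_term nu0 _); last first.
  by move=> k; rewrite !mxE mulr_ge0 ?ler0n ?V_ge0.
rewrite !mxE -[1]mul1r; apply: ler_pM; rewrite ?ler01 //; last exact: V0_ge1.
by rewrite ler1n.
Qed.

Lemma int_prod (n : int) : (0 : rat) <= (1 + n%:~R) * n%:~R.
Proof.
have -> : (1 + n%:~R : rat) = (1 + n)%:~R by rewrite intrD.
rewrite -intrM ler0z.
have : (0 <= (1 + n) * n)%R by nia.
done.
Qed.

Lemma part1 N (prox : rel 'I_N) (hatd : 'I_N -> nat) :
  blowup_proximity prox ->
  (exists nu, (0 < hatd nu)%N) ->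
  forall (x : rat) (f : 'I_N -> int),
      int_antinef prox f -> is_xiF prox hatd f x ->
      exists nu : 'I_N, lambdaF prox hatd f nu = x /\
                        ((3 <= valence prox nu)%N \/ (0 < hatd nu)%N).
Proof.
move=> hb hex x f hf [[nu0 hnu0] hmin].
have hw : wf prox by case: hb.
case: (boolP [exists nu, (lambdaF prox hatd f nu == x) &&
                         ((3 <= valence prox nu)%N || (0 < hatd nu)%N)]).
  by case/existsP => nu /andP [/eqP h1 /orP h2]; exists nu; split => //; case: h2; auto.
rewrite negb_exists => /forallP H.
have HS : forall nu, lambdaF prox hatd f nu = x ->
    (valence prox nu <= 2)%N /\ hatd nu = 0%N.
  move=> nu hnu; have := H nu; rewrite hnu eqxx /= negb_or -leqNgt lt0n negbK => /andP [h1 /eqP h2].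
  by [].
exfalso.
set k := kcoef prox.
set d := Dcoef prox hatd.
set fr := fun mu => (f mu)%:~R : rat.
pose A mu := fr mu + k mu + 1 - x * d mu.
pose S := [set nu | lambdaF prox hatd f nu == x].
have dpos : forall mu, 0 < d mu by move=> mu; apply: D_pos.
have hA0 : forall mu, 0 <= A mu.
  move=> mu; have := hmin mu; rewrite /lambdaF ler_pdivlMr // => h.
  by rewrite /A subr_ge0.
have hAS : forall mu, mu \in S -> A mu = 0.
  move=> mu; rewrite inE /lambdaF => /eqP e.
  rewrite /A -e divfK ?subrr //; exact: lt0r_neq0.
have hAnS : forall mu, mu \notin S -> 0 < A mu.
  move=> mu; rewrite inE => hne.
  have : x < lambdaF prox hatd f mu by rewrite lt_neqAle hmin andbT eq_sym.
  by rewrite /lambdaF ltr_pdivlMr // => h; rewrite /A subr_gt0.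
have dotA : forall nu, dotE prox A nu = dotE prox fr nu + dotE prox k nu
     + \sum_mu interE prox mu nu - x * dotE prox d nu.
  move=> nu; rewrite /dotE.
  rewrite (eq_bigr (fun mu => fr mu * interE prox mu nu + k mu * interE prox mu nu
      + interE prox mu nu - x * (d mu * interE prox mu nu))); last by move=> mu _; rewrite /A; ring.
  by rewrite sumrB -mulr_sumr !big_split.
have key : forall nu, nu \in S ->
    \sum_(mu | mu != nu) interE prox mu nu = 2 /\
    forall mu, mu != nu -> mu \notin S -> interE prox mu nu = 0.
  move=> nu hnu.
  have [hv hd] : (valence prox nu <= 2)%N /\ hatd nu = 0%N.
    by apply: HS; move: hnu; rewrite inE => /eqP.
  have hs : \sum_(mu | mu != nu) interE prox mu nu <= 2.
    apply: le_trans (valence_bd nu hb) _; by rewrite (ler_nat _ _ 2).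
  have hf0 : dotE prox fr nu <= 0 by apply: hf.
  have e1 : dotE prox A nu = dotE prox fr nu - 2 + \sum_(mu | mu != nu) interE prox mu nu.
    rewrite dotA dotE_D // hd (bigD1 nu) //= -(KE nu hw) /k; ring.
  have e2 : dotE prox A nu = \sum_(mu | mu != nu) A mu * interE prox mu nu.
    by rewrite /dotE (bigD1 nu) //= hAS // mul0r add0r.
  have g0 : 0 <= \sum_(mu | mu != nu) A mu * interE prox mu nu.
    apply: sumr_ge0 => mu hmu; rewrite mulr_ge0 //.
    by case/andP: (interE_off_bd hb hmu).
  have z0 : \sum_(mu | mu != nu) A mu * interE prox mu nu = 0.
    apply/eqP; rewrite eq_le g0 andbT -e2 e1; lra.
  split.
    apply/eqP; rewrite eq_le hs /=.
    move: z0; rewrite -e2 e1 => z0; lra.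
  move=> mu hmu hmS.
  have := psumr_eq0P _ z0 hmu.
  move=> /(_ _)/eqP; rewrite mulf_eq0 (gt_eqF (hAnS _ hmS)) /= => /(_ _)/eqP; apply.
  by move=> i hi; rewrite mulr_ge0 //; case/andP: (interE_off_bd hb hi).
pose z mu : rat := (mu \in S)%:R.
pose c j := \sum_nu z nu * Umx prox nu j.
have hz : forall nu, nu \in S -> dotE prox k nu + dotE prox z nu = 0.
  move=> nu hnu; have [k1 k2] := key nu hnu.
  have -> : dotE prox z nu = interE prox nu nu + \sum_(i | i != nu) interE prox i nu.
    rewrite /dotE (bigD1 nu) //= /z hnu mul1r; congr (_ + _).
    apply: eq_bigr => i hi; case: (boolP (i \in S)) => his; first by rewrite mul1r.
    by rewrite mul0r k2.
  rewrite k1 addrA -/(dotE prox k nu) KE //; ring.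
have T0 : \sum_nu z nu * (dotE prox k nu + dotE prox z nu) = 0.
  apply: big1 => nu _; rewrite /z; case: (boolP (nu \in S)) => h; last by rewrite mul0r.
  by rewrite hz // mulr0.
have hkz : forall nu, dotE prox k nu + dotE prox z nu = - \sum_j (1 + c j) * Umx prox nu j.
  move=> nu; rewrite !dotE_U rv_k // -opprD -big_split /=; congr (- _).
  apply: eq_bigr => j _; rewrite mxE mulrDl; congr (_ + _).
  rewrite mxE /c; congr (_ * _); apply: eq_bigr => i _; by rewrite /rv mxE.
have T1 : \sum_nu z nu * (dotE prox k nu + dotE prox z nu) = - \sum_j (1 + c j) * c j.
  rewrite (eq_bigr (fun nu => - \sum_j z nu * ((1 + c j) * Umx prox nu j))); last first.
    by move=> nu _; rewrite hkz mulrN mulr_sumr.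
  rewrite sumrN exchange_big /=; congr (- _); apply: eq_bigr => j _.
  rewrite /c mulr_sumr; apply: eq_bigr => nu _; ring.
have hcint : forall j, c j = (\sum_nu ((nu \in S) : nat)%:Z * ((nu == j) : nat)%:Z
      - \sum_nu ((nu \in S) : nat)%:Z * ((prox j nu) : nat)%:Z)%:~R.
  move=> j; rewrite /c intrB !rmorph_sum -sumrB; apply: eq_bigr => nu _.
  by rewrite UE /z; case: (nu \in S); case: (nu == j); case: (prox j nu).
have hc : forall j, 0 <= (1 + c j) * c j by move=> j; rewrite hcint int_prod.
have nu0S : nu0 \in S by rewrite inE hnu0.
case: (arg_minnP (fun i : 'I_N => val i) nu0S) => j0 j0S j0min.
have cj0 : c j0 = 1.
  have j0S' : (j0 \in S) = true := j0S.
  rewrite /c (bigD1 j0) //= /z j0S' UE eqxx prox_irr // subr0 !mul1r.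
  rewrite big1 ?addr0 // => nu hnu.
  case: (boolP (nu \in S)) => hs; last by rewrite mul0r.
  rewrite UE (negbTE hnu).
  case: (boolP (prox j0 nu)) => hp; last by rewrite subrr mulr0.
  have := hw _ _ hp; have := j0min nu hs; rewrite leqNgt => /negP; done.
have : 2 <= \sum_j (1 + c j) * c j.
  apply: le_trans (sum_ge_term j0 hc); rewrite cj0; lra.
move: T0; rewrite T1 => /eqP; rewrite oppr_eq0 => /eqP ->; lra.
Qed.

Theorem mainTheorem13 (N : nat) (prox : rel 'I_N) (hatd : 'I_N -> nat) :
  blowup_proximity prox ->
  (exists nu, (0 < hatd nu)%N) ->
  (forall (x : rat) (f : 'I_N -> int),
      jumping_number prox hatd x -> int_antinef prox f -> is_xiF prox hatd f x ->
      exists nu : 'I_N, lambdaF prox hatd f nu = x /\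
                        ((3 <= valence prox nu)%N \/ (0 < hatd nu)%N))
  /\
  (forall x : rat, jumping_number prox hatd x ->
      exists nu : 'I_N, ((3 <= valence prox nu)%N \/ (0 < hatd nu)%N) /\
                        Hset prox hatd nu x).
Proof.
move=> hb hex; split.
  by move=> x f _ hf hx; apply: part1.
move=> x [f [hf hx]].
have [nu [h1 h2]] := part1 hb hex hf hx.
by exists nu; split => //; exists f; split.
Qed.
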